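(* Ideal semantics is not serialisable: there is no selection function $\alpha$ and termination function $\beta$ such that $\mathrm{id}(F)=\mathcal{E}^{\alpha,\beta}(F)$ for every abstract argumentation framework $F$.
   Context: An abstract argumentation framework (AF) is a pair $F=(A,R)$ with $A$ a finite subset of a fixed universal set of arguments $\mathfrak{A}$ and $R\subseteq A\times A$ ($a\to b$ means $(a,b)\in R$). For $S\subseteq A$: $S^+=\{a\mid \exists b\in S: b\to a\}$, $S^-=\{a\mid\exists b\in S: a\to b\}$; for sets $S,S'$, $S\to S'$ means $S^+\cap S'\neq\emptyset$. $S$ is admissible if it is conflict-free and every attacker of an element of $S$ is attacked by some element of $S$. A preferred extension is an inclusion-maximal admissible set. The ideal extension is the inclusion-maximal admissible set $E$ with $E\subseteq E'$ for every preferred extension $E'$; $\mathrm{id}(F)$ is the set of ideal extensions of $F$. An initial set is a non-empty admissible set with no non-empty admissible proper subset; $\mathrm{IS}(F)$ is the set of initial sets. An initial set $S$ is unattacked if $S^-=\emptyset$; unchallenged if $S^-\neq\emptyset$ and no $S'\in\mathrm{IS}(F)$ has $S'\to S$; challenged if some $S'\in\mathrm{IS}(F)$ has $S'\to S$. Write $\mathrm{IS}^{u}(F),\mathrm{IS}^{uc}(F),\mathrm{IS}^{c}(F)$ for these sets. The reduct is $F^S=(A',R\cap(A'\times A'))$ with $A'=A\setminus(S\cup S^+)$. A selection function $\alpha$ maps any three sets $X,Y,Z$ of sets of arguments to a subset of $X\cup Y\cup Z$; a termination function $\beta$ maps pairs $(F,S)$ to $\{0,1\}$. Transitions: $(F,S)\to(F^{S'},S\cup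 S')$ whenever $S'\in\alpha(\mathrm{IS}^u(F),\mathrm{IS}^{uc}(F),\mathrm{IS}^c(F))$. $(F,S)\leadsto^{\alpha,\beta}(F',S')$ means $(F',S')$ is reachable from $(F,S)$ in finitely many (possibly zero) transitions and $\beta(F',S')=1$. $\mathcal{E}^{\alpha,\beta}(F)$ is the set of all $S$ with $(F,\emptyset)\leadsto^{\alpha,\beta}(F',S)$ for some $F'$. A semantics $\sigma$ is serialisable if there exist $\alpha,\beta$ with $\sigma(F)=\mathcal{E}^{\alpha,\beta}(F)$ for all AFs $F$. *)

(* Defs.v *)
From mathcomp Require Import all_boot.
From mathcomp Require Import boolp classical_sets cardinality.
Set Implicit Arguments. Unset Strict Implicit. Unset Printing Implicit Defensive.
Local Open Scope classical_set_scope.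

Definition arg := nat.

Definition AF := (set arg * set (arg * arg))%type.
Definition is_AF (F : AF) : Prop := finite_set F.1 /\ F.2 `<=` F.1 `*` F.1.

Definition splus (R : set (arg * arg)) (S : set arg) : set arg :=
  [set a | exists2 b, S b & R (b, a)].
Definition sminus (R : set (arg * arg)) (S : set arg) : set arg :=
  [set a | exists2 b, S b & R (a, b)].
Definition set_att (R : set (arg * arg)) (S S' : set arg) : Prop :=
  splus R S `&` S' !=set0.

Definition conflict_free (F : AF) (S : set arg) : Prop :=
  forall a b, S a -> S b -> ~ F.2 (a, b).
Definition admissible (F : AF) (S : set arg) : Prop :=
  [/\ S `<=` F.1, conflict_free F S &
      forall a b, S b -> F.2 (a, b) -> exists2 c, S c & F.2 (c, a)].
Definition preferred (F : AF) (S : set arg) : Prop :=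
  admissible F S /\ forall T, admissible F T -> S `<=` T -> T = S.

Definition in_all_preferred (F : AF) (E : set arg) : Prop :=
  forall P, preferred F P -> E `<=` P.
Definition ideal_ext (F : AF) (E : set arg) : Prop :=
  [/\ admissible F E, in_all_preferred F E &
      forall E', admissible F E' -> in_all_preferred F E' -> E `<=` E' -> E' = E].
Definition ideal_sem (F : AF) : set (set arg) := [set E | ideal_ext F E].

Definition initial (F : AF) (S : set arg) : Prop :=
  [/\ admissible F S, S !=set0 &
      forall T, admissible F T -> T !=set0 -> T `<=` S -> T = S].
Definition IS (F : AF) : set (set arg) := [set S | initial F S].
Definition IS_u (F : AF) : set (set arg) :=
  [set S | initial F S /\ sminus F.2 S = set0].
Definition IS_uc (F : AF) : set (set arg) :=
  [set S | [/\ initial F S, sminus F.2 S !=set0 &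
                ~ exists2 S', IS F S' & set_att F.2 S' S]].
Definition IS_c (F : AF) : set (set arg) :=
  [set S | initial F S /\ exists2 S', IS F S' & set_att F.2 S' S].

Definition reduct (F : AF) (S : set arg) : AF :=
  let A' := F.1 `\` (S `|` splus F.2 S) in (A', F.2 `&` (A' `*` A')).

Definition selfun := set (set arg) -> set (set arg) -> set (set arg) -> set (set arg).
Definition is_selection (alpha : selfun) : Prop :=
  forall X Y Z, alpha X Y Z `<=` X `|` Y `|` Z.
Definition termfun := AF -> set arg -> bool.

Definition step (alpha : selfun) (c c' : AF * set arg) : Prop :=
  exists2 S', alpha (IS_u c.1) (IS_uc c.1) (IS_c c.1) S' &
              c' = (reduct c.1 S', c.2 `|` S').

Inductive reach (alpha : selfun) : AF * set arg -> AF * set arg -> Prop :=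
| reach_refl c : reach alpha c c
| reach_step c c' c'' : step alpha c c' -> reach alpha c' c'' -> reach alpha c c''.

Definition serial_ext (alpha : selfun) (beta : termfun) (F : AF) : set (set arg) :=
  [set S | exists F', reach alpha (F, set0) (F', S) /\ beta F' S].

Definition serialisable (sigma : AF -> set (set arg)) : Prop :=
  exists (alpha : selfun) (beta : termfun),
    is_selection alpha /\ forall F, is_AF F -> sigma F = serial_ext alpha beta F.

(* Main.v *)
Require Import Defs.
From mathcomp Require Import all_boot.
From mathcomp Require Import boolp classical_sets cardinality.
Set Implicit Arguments. Unset Strict Implicit. Unset Printing Implicit Defensive.
Local Open Scope classical_set_scope.

Definition r1 (x y : nat) : bool :=
  match x, y with 0,1 | 1,0 | 1,1 | 2,3 | 3,2 => true | _,_ => false end.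
Definition r2 (x y : nat) : bool :=
  match x, y with 0,1 | 1,0 | 2,1 | 2,3 | 3,2 => true | _,_ => false end.
Definition A4 : set arg := [set x | (x < 4)%N].
Definition F1 : AF := (A4, [set p | r1 p.1 p.2]).
Definition F2 : AF := (A4, [set p | r2 p.1 p.2]).

Ltac n4 x := case: x => [|[|[|[|x]]]].

Lemma AF1 : is_AF F1.
Proof. split; first exact: finite_II.
by case=> x y /=; n4 x; n4 y. Qed.
Lemma AF2 : is_AF F2.
Proof. split; first exact: finite_II.
by case=> x y /=; n4 x; n4 y. Qed.

Lemma adm_single (F : AF) (r : nat -> nat -> bool) x :
  F = (A4, [set p | r p.1 p.2]) -> (x < 4)%N -> ~~ r x x ->
  (forall a, r a x -> r x a) -> admissible F [set x].
Proof.
move=> -> Hx Hxx Hd; split.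
- by move=> y; rewrite /set1 /= => ->.
- by move=> a b; rewrite /set1 /= => -> ->; apply/negP.
- by move=> a b; rewrite /set1 /= => -> Hab; exists x => //; apply: Hd.
Qed.

Lemma init_single (F : AF) x : admissible F [set x] -> initial F [set x].
Proof.
move=> Ha; split => //; first by exists x.
move=> T _ [y Ty] TS; apply: funext => z; apply: propext; split; first exact: TS.
by move=> /= ->; have := TS _ Ty => /= <-.
Qed.

Lemma init_sub (F : AF) S x : initial F S -> admissible F [set x] -> S x -> S = [set x].
Proof.
case=> _ _ Hm Ha Sx; symmetry; apply: Hm => //; first by exists x.
by move=> y /= ->.
Qed.

Lemma adm1 x : x \in [:: 0; 2; 3] -> admissible F1 [set x].
Proof. rewrite !inE => /or3P [] /eqP ->; apply: (@adm_single _ r1) => //; by case=> [|[|[|[|a]]]]. Qed.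
Lemma adm2 x : x \in [:: 0; 2; 3] -> admissible F2 [set x].
Proof. rewrite !inE => /or3P [] /eqP ->; apply: (@adm_single _ r2) => //; by case=> [|[|[|[|a]]]]. Qed.

Lemma init_char1 S : initial F1 S <-> S = [set 0] \/ S = [set 2] \/ S = [set 3].
Proof.
split; last first.
  by case=> [->|[->|->]]; apply: init_single; apply: adm1.
move=> H; have [[Hsub Hcf Hdef] [x Sx] _] := H.
have := Hsub _ Sx; rewrite /= /A4 /=.
move: Sx; n4 x => // Sx _.
- by left; apply: init_sub H (adm1 _) Sx.
- by exfalso; apply: (Hcf 1 1).
- by right; left; apply: init_sub H (adm1 _) Sx.
- by right; right; apply: init_sub H (adm1 _) Sx.
Qed.

Lemma init_char2 S : initial F2 S <-> S = [set 0] \/ S = [set 2] \/ S = [set 3].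
Proof.
split; last first.
  by case=> [->|[->|->]]; apply: init_single; apply: adm2.
move=> H; have [[Hsub Hcf Hdef] [x Sx] _] := H.
have := Hsub _ Sx; rewrite /= /A4 /=.
move: Sx; n4 x => // Sx _.
- by left; apply: init_sub H (adm2 _) Sx.
- have [c Sc] := Hdef 2 1 Sx erefl.
  have := Hsub _ Sc; rewrite /= /A4 /=.
  move: Sc; n4 c => // Sc _ _.
  by right; right; apply: init_sub H (adm2 _) Sc.
- by right; left; apply: init_sub H (adm2 _) Sx.
- by right; right; apply: init_sub H (adm2 _) Sx.
Qed.

Lemma att_single (F : AF) (r : nat -> nat -> bool) x y : F.2 = [set p | r p.1 p.2] ->
  set_att F.2 [set x] [set y] <-> r x y.
Proof.
move=> ->; split.
- case=> z [[b Hb Hbz] Hz]; move: Hb Hz Hbz; rewrite /set1 /= => -> -> //.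
- by move=> H; exists y; split => //; exists x.
Qed.

Section Gen.
Variables (F : AF) (r : nat -> nat -> bool).
Hypothesis HF : F.2 = [set p | r p.1 p.2].
Hypothesis Hchar : forall S, initial F S <-> S = [set 0] \/ S = [set 2] \/ S = [set 3].
Hypothesis Hr : forall x y, x \in [:: 0; 2; 3] -> y \in [:: 0; 2; 3] -> r x y = r1 x y.
Hypothesis Hr10 : r 1 0.

Lemma IS_u_gen : IS_u F = set0.
Proof.
apply: funext => S; apply: propext; split => //.
case=> /Hchar [->|[->|->]] E.
- have : sminus F.2 [set 0] 1 by rewrite HF; exists 0.
  by rewrite E.
- have : sminus F.2 [set 2] 3 by rewrite HF; exists 2 => //=; rewrite Hr.
  by rewrite E.
- have : sminus F.2 [set 3] 2 by rewrite HF; exists 3 => //=; rewrite Hr.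
  by rewrite E.
Qed.

Lemma IS_uc_gen : IS_uc F = [set [set 0]].
Proof.
apply: funext => S; apply: propext; split.
- case=> /Hchar [->|[->|->]] // _ []; [exists [set 3]|exists [set 2]];
    (try by apply/Hchar; auto); by apply/(att_single _ _ HF); rewrite Hr.
- rewrite /set1 /= => ->; split; first by apply/Hchar; left.
  + by exists 1; rewrite HF; exists 0.
  + by case=> S' /Hchar [->|[->|->]] /(att_single _ _ HF); rewrite Hr.
Qed.

Lemma IS_c_gen : IS_c F = [set S | S = [set 2] \/ S = [set 3]].
Proof.
apply: funext => S; apply: propext; split.
- case=> /Hchar [->|[->|->]] [S' /Hchar [->|[->|->]] /(att_single _ _ HF)]; rewrite Hr //=; auto.
- move=> [] ->; (split; first by apply/Hchar; auto).
  + by exists [set 3]; [apply/Hchar; auto|apply/(att_single _ _ HF); rewrite Hr].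
  + by exists [set 2]; [apply/Hchar; auto|apply/(att_single _ _ HF); rewrite Hr].
Qed.
End Gen.

Lemma Hr1 : forall x y, x \in [:: 0; 2; 3] -> y \in [:: 0; 2; 3] -> r1 x y = r1 x y.
Proof. by []. Qed.
Lemma Hr2 : forall x y, x \in [:: 0; 2; 3] -> y \in [:: 0; 2; 3] -> r2 x y = r1 x y.
Proof. by move=> x y; rewrite !inE => /or3P [] /eqP -> /or3P [] /eqP ->. Qed.

Lemma ISu1 : IS_u F1 = set0. Proof. exact (@IS_u_gen F1 r1 erefl init_char1 Hr1 isT). Qed.
Lemma ISu2 : IS_u F2 = set0. Proof. exact (@IS_u_gen F2 r2 erefl init_char2 Hr2 isT). Qed.
Lemma ISuc1 : IS_uc F1 = [set [set 0]]. Proof. exact (@IS_uc_gen F1 r1 erefl init_char1 Hr1 isT). Qed.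
Lemma ISuc2 : IS_uc F2 = [set [set 0]]. Proof. exact (@IS_uc_gen F2 r2 erefl init_char2 Hr2 isT). Qed.
Lemma ISc1 : IS_c F1 = [set S | S = [set 2] \/ S = [set 3]]. Proof. exact (@IS_c_gen F1 r1 erefl init_char1 Hr1). Qed.
Lemma ISc2 : IS_c F2 = [set S | S = [set 2] \/ S = [set 3]]. Proof. exact (@IS_c_gen F2 r2 erefl init_char2 Hr2). Qed.

Lemma inred (r : nat -> nat -> bool) x : r 0 1 ->
  (A4 `\` ([set 0] `|` splus [set p | r p.1 p.2] [set 0])) x -> x = 2 \/ x = 3.
Proof.
move=> H01 [Hx4 Hxn]; move: Hx4 Hxn; rewrite /A4 /=.
n4 x => // _ Hn.
- by exfalso; apply: Hn; left.
- by exfalso; apply: Hn; right; exists 0.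
- by left.
- by right.
Qed.

Lemma red_eq : reduct F1 [set 0] = reduct F2 [set 0].
Proof.
rewrite /reduct /=.
have Hs : splus [set p | r1 p.1 p.2] [set 0] = splus [set p | r2 p.1 p.2] [set 0].
  apply: funext => a; apply: propext; split; case=> b Hb H; exists b => //;
  move: Hb H; rewrite /set1 /= => ->; by n4 a.
rewrite Hs; congr pair; apply: funext; case=> x y; apply: propext.
split; case=> /= H [/= Hx /= Hy]; (split; last by split).
- by move: H; case: (inred _ Hx) => // ->; case: (inred _ Hy) => // ->.
- by move: H; case: (inred _ Hx) => // ->; case: (inred _ Hy) => // ->.
Qed.

Lemma pref1_02 : preferred F1 [set x | x = 0 \/ x = 2].
Proof.
split.
- split.
  + by move=> x [->|->].
  + by move=> a b [->|->] [->|->].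
  + move=> a b [->|->]; n4 a => // _; by [exists 0; [left|] | exists 2; [right|]].
- move=> T [Tsub Tcf _] HsT; apply: funext => x; apply: propext; split; last exact: HsT.
  move=> Tx; have := Tsub _ Tx; move: Tx; rewrite /= /A4 /=; n4 x => // Tx _.
  + by left.
  + by exfalso; apply: (Tcf 0 1 (HsT 0 (or_introl erefl)) Tx).
  + by right.
  + by exfalso; apply: (Tcf 2 3 (HsT 2 (or_intror erefl)) Tx).
Qed.

Lemma pref1_03 : preferred F1 [set x | x = 0 \/ x = 3].
Proof.
split.
- split.
  + by move=> x [->|->].
  + by move=> a b [->|->] [->|->].
  + move=> a b [->|->]; n4 a => // _; by [exists 0; [left|] | exists 3; [right|]].
- move=> T [Tsub Tcf _] HsT; apply: funext => x; apply: propext; split; last exact: HsT.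
  move=> Tx; have := Tsub _ Tx; move: Tx; rewrite /= /A4 /=; n4 x => // Tx _.
  + by left.
  + by exfalso; apply: (Tcf 0 1 (HsT 0 (or_introl erefl)) Tx).
  + by exfalso; apply: (Tcf 3 2 (HsT 3 (or_intror erefl)) Tx).
  + by right.
Qed.

Lemma pref2_13 : preferred F2 [set x | x = 1 \/ x = 3].
Proof.
split.
- split.
  + by move=> x [->|->].
  + by move=> a b [->|->] [->|->].
  + move=> a b [->|->]; n4 a => // _; by [exists 1; [left|] | exists 3; [right|]].
- move=> T [Tsub Tcf _] HsT; apply: funext => x; apply: propext; split; last exact: HsT.
  move=> Tx; have := Tsub _ Tx; move: Tx; rewrite /= /A4 /=; n4 x => // Tx _.
  + by exfalso; apply: (Tcf 0 1 Tx (HsT 1 (or_introl erefl))).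
  + by left.
  + by exfalso; apply: (Tcf 2 3 Tx (HsT 3 (or_intror erefl))).
  + by right.
Qed.

Lemma ideal1 : ideal_ext F1 [set 0].
Proof.
split.
- by apply: adm1.
- move=> P [[Psub Pcf Pdef] Pmax] x; rewrite /set1 /= => ->.
  have P1 : ~ P 1 by move=> P1; apply: (Pcf 1 1 P1 P1).
  have Hadm : admissible F1 (P `|` [set 0]).
    split.
    + by move=> y [/Psub|]; rewrite /set1 /A4 /= => // ->.
    + move=> a b [Pa|]; [move=> [Pb|]|move=> -> [Pb|]]; rewrite /set1 /=.
      * exact: Pcf.
      * by move=> ->; move: Pa; n4 a.
      * by move: Pb; n4 b.
      * by move=> ->.
    + move=> a b [Pb|]; rewrite /set1 /=.
      * by move=> /(Pdef _ _ Pb) [c Pc Hc]; exists c => //; left.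
      * by move=> -> H; exists 0; [right|]; move: H; n4 a.
  have := Pmax _ Hadm (fun y Py => or_introl Py) => E.
  by rewrite -E; right.
- move=> E' Ea Eall Esub; apply: funext => x; apply: propext; split; last exact: Esub.
  move=> Ex; have := Eall _ pref1_02 _ Ex; have := Eall _ pref1_03 _ Ex.
  by rewrite /set1 /= => -[->|->] // [].
Qed.

Lemma reach_mono alpha c c' : reach alpha c c' -> c.2 `<=` c'.2.
Proof.
elim=> [c0|c0 c1 c2 [S' _ ->] _ IH] //.
move=> x Hx; apply: IH; by left.
Qed.

Lemma reach_inv alpha c c' : reach alpha c c' ->
  c = c' \/ exists2 c1, step alpha c c1 & reach alpha c1 c'.
Proof. case; [by left | by move=> ? c1 ? H1 H2; right; exists c1]. Qed.

Lemma sel_init alpha F S : is_selection alpha ->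
  alpha (IS_u F) (IS_uc F) (IS_c F) S -> initial F S.
Proof. by move=> sel /sel [[[H _]|[H _ _]]|[H _]]. Qed.

Theorem theorem8 : ~ serialisable ideal_sem.
Proof.
move=> [alpha [beta [sel H]]].
have E1 := H F1 AF1; have E2 := H F2 AF2.
have I1 : ideal_sem F1 [set 0] by exact: ideal1.
rewrite E1 in I1; case: I1 => F' [Hr Hb].
case: (reach_inv Hr) => [[_ E]|[c1 [S' HS' ->] Hr1]].
  by have : [set 0] 0 by []; rewrite -E.
have HS'i := sel_init sel HS'.
have Hm := reach_mono Hr1; rewrite /= set0U in Hm.
have ES' : S' = [set 0].
  case/init_char1: HS'i => [//|[E|E]]; [have := Hm 2|have := Hm 3]; rewrite E;
  by move=> /(_ erefl).
subst S'.
case: (reach_inv Hr1) => [[EF _]|[c2 [S'' HS'' ->] Hr2]]; last first.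
  have [[Hsub _ _] [x Sx] _] := sel_init sel HS''.
  have Ex : [set 0] x by apply: (reach_mono Hr2); right.
  have := Hsub _ Sx; rewrite /reduct /= => -[_ Hn]; apply: Hn; left; exact: Ex.
subst F'.
have I2 : ideal_sem F2 [set 0].
  rewrite E2; exists (reduct F1 [set 0]); split; last exact: Hb.
  apply: (@reach_step _ _ (reduct F2 [set 0], set0 `|` [set 0])).
    exists [set 0] => //=; rewrite ISu2 ISuc2 ISc2 -ISu1 -ISuc1 -ISc1; exact: HS'.
  rewrite set0U red_eq; exact: reach_refl.
case: I2 => _ Hall _.
by case: (Hall _ pref2_13 0 erefl).
Qed.
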